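(* Let $K\ge 1$, $n_1,\ldots,n_K$ be positive integers, $\Omega\subseteq\{1,\ldots,n_1\}\times\cdots\times\{1,\ldots,n_K\}$ an index set, $\mathcal{Y}_\Omega\in\mathbb{R}^{n_1\times\cdots\times n_K}$ a tensor supported on $\Omega$, $C>0$ and $\lambda_1,\ldots,\lambda_K>0$. Consider the nonnegative low-rank tensor completion problem $$\min_{\substack{\Theta_k\in\mathcal{P}^{n_k},\ \mathcal{W}^{(k)}\in\mathbb{R}^{n_1\times\cdots\times n_K}\\ k\in\{1,\ldots,K\}}}\ C\,\big\|\mathcal{W}_\Omega-\mathcal{Y}_\Omega\big\|^2+\sum_{k=1}^K\frac{1}{2\lambda_k}\big\langle \Theta_k^{\dagger}W^{(k)}_k,\,W^{(k)}_k\big\rangle\quad\text{subject to}\quad \mathcal{W}\ge 0,$$ where $\mathcal{W}=\sum_{k=1}^K\mathcal{W}^{(k)}$. An equivalent partial dual formulation of this problem is $$\min_{\substack{\Theta_k\in\mathcal{P}^{n_k}\\ k\in\{1,\ldots,K\}}}\ \max_{\substack{\mathcal{Z}\in\mathcal{C}\\ \mathcal{S}\in\mathbb{R}_+^{n_1\times\cdots\times n_K}}}\ \langle\mathcal{Z},\mathcal{Y}_\Omega\rangle-\frac{1}{4C}\|\mathcal{Z}\|^2-\sum_{k=1}^K\frac{\lambda_k}{2}\big\langle Z_k+S_k,\ \Theta_k(Z_k+S_k)\big\rangle,$$ where $\mathcal{C}=\{\mathcal{Z}\in\mathbb{R}^{n_1\times\cdots\times n_K}:\ \mathcal{Z}=\mathcal{Z}_\Omega\}$;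 here $\mathcal{Z}$ is the dual tensor variable corresponding to the primal problem and $\mathcal{S}$ is the dual tensor variable corresponding to the nonnegativity constraint $\mathcal{W}\ge 0$.
   Context: For a tensor $\mathcal{W}\in\mathbb{R}^{n_1\times\cdots\times n_K}$, $\mathcal{W}_\Omega$ denotes the tensor with $(\mathcal{W}_\Omega)_{i_1,\ldots,i_K}=\mathcal{W}_{i_1,\ldots,i_K}$ if $(i_1,\ldots,i_K)\in\Omega$ and $0$ otherwise. The inner product of two same-sized tensors (or matrices) is $\langle\mathcal{W},\mathcal{U}\rangle=\sum_{i_1,\ldots,i_K}\mathcal{W}_{i_1,\ldots,i_K}\mathcal{U}_{i_1,\ldots,i_K}$, and $\|\cdot\|$ is the induced (Frobenius) norm. $\mathcal{W}\ge 0$ means all entries are nonnegative, and $\mathbb{R}_+^{n_1\times\cdots\times n_K}$ is the set of entrywise nonnegative tensors. For a tensor $\mathcal{W}$, the mode-$k$ unfolding $W_k\in\mathbb{R}^{n_k\times n_1\cdots n_{k-1}n_{k+1}\cdots n_K}$ is the matrix whose columns are the mode-$k$ fibers $\mathcal{W}_{i_1,\ldots,i_{k-1},:,i_{k+1},\ldots,i_K}$; thus $W^{(k)}_k$, $Z_k$, $S_k$ are the mode-$k$ unfoldings of $\mathcal{W}^{(k)}$, $\mathcal{Z}$, $\mathcal{S}$ respectively. $\mathcal{P}^d=\{\Theta\in\mathbb{R}^{d\times d}:\ \Theta\succeq 0,\ \mathrm{tr}(\Theta)=1\}$, and $\Theta^\dagger$ denotes the Moore–Penrose pseudo-inverse of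 $\Theta$. *)

(* Defs.v *)
From HB Require Import structures.
From mathcomp Require Import all_boot all_order all_algebra.
From mathcomp Require Import boolp classical_sets reals constructive_ereal ereal.
Set Implicit Arguments. Unset Strict Implicit. Unset Printing Implicit Defensive.
Import Order.TTheory GRing.Theory Num.Theory.
Local Open Scope ring_scope.

Section Tensors.
Variables (R : realType) (K : nat) (n : 'I_K -> nat).

Definition idx := {dffun forall k : 'I_K, 'I_(n k)}.
Definition tensor := idx -> R.

Definition restr (Om : {set idx}) (W : tensor) : tensor :=
  fun i => if i \in Om then W i else 0.

Definition tdot (W U : tensor) : R := \sum_(i : idx) W i * U i.
Definition tnorm2 (W : tensor) : R := tdot W W.
Definition tnonneg (W : tensor) : Prop := forall i, 0 <= W i.

(* indices of the modes other than k, indexing the columns of the mode-k unfolding *)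
Definition coli (k : 'I_K) :=
  {dffun forall j : {j : 'I_K | j != k}, 'I_(n (val j))}.

(* the multi-index with k-th coordinate a and other coordinates c *)
Definition merge (k : 'I_K) (a : 'I_(n k)) (c : coli k) : idx :=
  @finfun _ (fun j : 'I_K => 'I_(n j)) (fun j : 'I_K =>
    match (j =P k) with
    | ReflectT e => eq_rect_r (fun j => 'I_(n j)) a e
    | ReflectF ne => c (exist _ j (introN eqP ne))
    end).

(* mode-k unfolding: columns are the mode-k fibers *)
Definition unfold (k : 'I_K) (W : tensor) : 'M[R]_(n k, #|{: coli k}|) :=
  \matrix_(a < n k, c < #|{: coli k}|) W (merge a (enum_val c)).

End Tensors.

Definition mxdot (R : realType) (p q : nat) (A B : 'M[R]_(p, q)) : R :=
  \sum_(i < p) \sum_(j < q) A i j * B i j.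

Definition psd (R : realType) (d : nat) (A : 'M[R]_d) : Prop :=
  A^T = A /\ forall v : 'cV[R]_d, 0 <= (v^T *m A *m v) 0 0.

Definition Pset (R : realType) (d : nat) (A : 'M[R]_d) : Prop :=
  psd A /\ \tr A = 1.

Definition is_MP (R : realType) (d : nat) (A X : 'M[R]_d) : Prop :=
  [/\ A *m X *m A = A, X *m A *m X = X, (A *m X)^T = A *m X & (X *m A)^T = X *m A].
Definition MPinv (R : realType) (d : nat) (A : 'M[R]_d) : 'M[R]_d :=
  xget 0 [set X | is_MP A X].

(* <Theta^dagger V, V>, with the standard convention that it is +oo unless the
   columns of V lie in the range of Theta *)
Definition pinv_quad (R : realType) (d m : nat) (Th : 'M[R]_d) (V : 'M[R]_(d, m))
  : \bar R :=
  if (V^T <= Th^T)%MS then (mxdot (MPinv Th *m V) V)%:E else +oo%E.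

Definition primal_obj (R : realType) (K : nat) (n : 'I_K -> nat)
  (Om : {set idx n}) (Y : tensor R n) (C : R) (lam : 'I_K -> R)
  (Th : forall k, 'M[R]_(n k)) (Wk : 'I_K -> tensor R n) : \bar R :=
  let W : tensor R n := fun i => \sum_(k < K) Wk k i in
  if `[< tnonneg W >] then
    ((C * tnorm2 (fun i => restr Om W i - restr Om Y i))%:E +
     \sum_(k < K) ((1 / (2 * lam k))%:E * pinv_quad (Th k) (unfold k (Wk k))))%E
  else +oo%E.

Definition dual_obj (R : realType) (K : nat) (n : 'I_K -> nat)
  (Om : {set idx n}) (Y : tensor R n) (C : R) (lam : 'I_K -> R)
  (Th : forall k, 'M[R]_(n k)) (Z S : tensor R n) : R :=
  tdot Z (restr Om Y) - (1 / (4 * C)) * tnorm2 Z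
  - \sum_(k < K) (lam k / 2) *
      mxdot (unfold k Z + unfold k S) (Th k *m (unfold k Z + unfold k S)).

Local Open Scope classical_set_scope.

Definition primal_inner (R : realType) (K : nat) (n : 'I_K -> nat)
  (Om : {set idx n}) (Y : tensor R n) (C : R) (lam : 'I_K -> R)
  (Th : forall k, 'M[R]_(n k)) : \bar R :=
  ereal_inf [set x | exists Wk : 'I_K -> tensor R n, x = primal_obj Om Y C lam Th Wk].

Definition dual_inner (R : realType) (K : nat) (n : 'I_K -> nat)
  (Om : {set idx n}) (Y : tensor R n) (C : R) (lam : 'I_K -> R)
  (Th : forall k, 'M[R]_(n k)) : \bar R :=
  ereal_sup [set x | exists Z S : tensor R n,
    [/\ Z = restr Om Z, tnonneg S & x = (dual_obj Om Y C lam Th Z S)%:E]].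

(* Main.v *)
Require Import Defs.
From HB Require Import structures.
From mathcomp Require Import all_boot all_order all_algebra.
From mathcomp Require Import boolp classical_sets reals constructive_ereal ereal.
From mathcomp Require Import ring lra.
Import Order.TTheory GRing.Theory Num.Theory.
Local Open Scope ring_scope.

Lemma fredholm (F : fieldType) N (H : 'M[F]_N) (b : 'rV[F]_N) : H^T = H ->
  (b <= H)%MS \/ exists d : 'rV_N, d *m H = 0 /\ (b *m d^T) 0 0 != 0.
Proof.
move=> Hs; set Kr := kermx H.
have KH : Kr *m H = 0 by apply/sub_kermxP.
have [bK|nz] := eqVneq (b *m Kr^T) 0.
- left.
  have sHK : (H <= kermx Kr^T)%MS.
    apply/sub_kermxP.
    by rewrite -[H *m _]trmxK trmx_mul trmxK Hs KH trmx0.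
  have rk : \rank (kermx Kr^T) = \rank H.
    rewrite mxrank_ker mxrank_tr mxrank_ker subKn //; exact: rank_leq_row.
  have sKH : (kermx Kr^T <= H)%MS.
    by rewrite -(mxrank_leqif_sup sHK).2 rk.
  apply: submx_trans sKH; exact/sub_kermxP.
- right.
  have /existsP[j Hj] : [exists j, (b *m Kr^T) 0 j != 0].
    apply: contraNT nz => /existsPn H0; apply/eqP/matrixP => i j.
    by rewrite ord1 [RHS]mxE; apply/eqP/negPn/H0.
  exists (row j Kr); split.
    by rewrite -row_mul KH row0.
  suff -> : (b *m (row j Kr)^T) 0 0 = (b *m Kr^T) 0 j by [].
  by rewrite !mxE; apply: eq_bigr => k _; rewrite !mxE.
Qed.
Section Abs.
Variables (R : realType) (N : nat) (H : 'I_N -> 'I_N -> R) (b : 'I_N -> R).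
Hypothesis Hsym : forall i j, H i j = H j i.

Definition Hv (x : 'I_N -> R) i := \sum_j H i j * x j.
Definition qf (x y : 'I_N -> R) := \sum_i x i * Hv y i.
Definition lf (x : 'I_N -> R) := \sum_i b i * x i.
Definition hh x := lf x - qf x x.
Definition shift (x : 'I_N -> R) t (d : 'I_N -> R) := fun i => x i + t * d i.

Lemma qf_sym x y : qf x y = qf y x.
Proof.
rewrite /qf /Hv.
under eq_bigr do rewrite mulr_sumr.
under [RHS]eq_bigr do rewrite mulr_sumr.
rewrite exchange_big; apply: eq_bigr => i _; apply: eq_bigr => j _.
by rewrite Hsym; ring.
Qed.

Lemma qf_shiftl x t d y : qf (shift x t d) y = qf x y + t * qf d y.
Proof.
rewrite /qf /shift mulr_sumr -big_split; apply: eq_bigr => i _ /=; ring.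
Qed.

Lemma qf_shiftr x t d y : qf y (shift x t d) = qf y x + t * qf y d.
Proof. by rewrite qf_sym qf_shiftl qf_sym (qf_sym d). Qed.

Lemma lf_shift x t d : lf (shift x t d) = lf x + t * lf d.
Proof.
rewrite /lf /shift mulr_sumr -big_split; apply: eq_bigr => i _ /=; ring.
Qed.

Lemma hh_shift x t d :
  hh (shift x t d) = hh x + t * (lf d - 2 * qf x d) - t ^ 2 * qf d d.
Proof.
rewrite /hh lf_shift qf_shiftl !qf_shiftr (qf_sym d x); ring.
Qed.

Hypothesis Hpsd : forall x, 0 <= qf x x.

Definition LF (F : {set 'I_N}) (x : 'I_N -> R) := forall i, i \notin F -> x i = 0.

Lemma qf_LF0 (F : {set 'I_N}) (y d : 'I_N -> R) : (forall i, i \in F -> Hv d i = 0) -> LF F y -> qf y d = 0.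
Proof.
move=> Hd Ly; rewrite /qf big1 // => i _.
by case: (boolP (i \in F)) => iF; [rewrite Hd ?mulr0| rewrite Ly ?mul0r].
Qed.

Lemma dich (F : {set 'I_N}) :
  (exists z, LF F z /\ forall y, LF F y -> hh y <= hh z) \/
  (exists d, LF F d /\ exists2 a, 0 < a & forall y t, LF F y -> hh (shift y t d) = hh y + t * a).
Proof.
pose Hm : 'M[R]_N := \matrix_(i, j) (if (i \in F) && (j \in F) then H i j else 0).
pose bm : 'rV[R]_N := \row_i (if i \in F then b i else 0).
have HmT : Hm^T = Hm.
  by apply/matrixP => i j; rewrite !mxE andbC Hsym.
case: (@fredholm _ _ Hm bm HmT) => [/submxP[D bD]|[d0 [d0H nz]]].
- left.
  pose z := fun i => if i \in F then D 0 i / 2 else 0.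
  have Hvz : forall i, i \in F -> Hv z i = b i / 2.
    move=> i iF.
    have : bm 0 i = (D *m Hm) 0 i by rewrite bD.
    rewrite !mxE iF => ->; rewrite mulr_suml /Hv; apply: eq_bigr => j _.
    rewrite /z !mxE iF andbT Hsym; case: (j \in F); ring.
  have Lz : LF F z by move=> i /negbTE iF; rewrite /z iF.
  exists z; split => // y Ly.
  pose d := fun i => y i - z i.
  have -> : y = shift z 1 d by apply/funext => i; rewrite /shift /d; ring.
  rewrite hh_shift.
  have -> : lf d - 2 * qf z d = 0.
    rewrite qf_sym /lf /qf mulr_sumr -sumrB big1 // => i _.
    case: (boolP (i \in F)) => iF; first by rewrite Hvz //; field.
    by rewrite /d Ly // Lz //; ring.
  have := Hpsd d; lra.
- right.
  set s := (bm *m d0^T) 0 0 in nz.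
  pose d := fun i => if i \in F then s * d0 0 i else 0.
  have Ld : LF F d by move=> i /negbTE iF; rewrite /d iF.
  have Hvd : forall i, i \in F -> Hv d i = 0.
    move=> i iF.
    have : (d0 *m Hm) 0 i = 0 by rewrite d0H mxE.
    rewrite mxE => e; rewrite /Hv; transitivity (s * \sum_j d0 0 j * Hm j i); last by rewrite e mulr0.
    rewrite mulr_sumr.
    apply: eq_bigr => j _; rewrite /d !mxE iF andbT Hsym.
    case: (j \in F); ring.
  exists d; split => //; exists (lf d).
    have sE : s = \sum_i (if i \in F then b i else 0) * d0 0 i.
      by rewrite /s mxE; apply: eq_bigr => i _; rewrite !mxE.
    have -> : lf d = s * s.
      rewrite {2}sE /lf mulr_sumr; apply: eq_bigr => i _; rewrite /d; case: (i \in F) => /=; ring.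
    by rewrite lt_def mulf_neq0 //= -expr2 sqr_ge0.
  move=> y t Ly; rewrite hh_shift (@qf_LF0 _ _ _ Hvd Ly) (@qf_LF0 _ _ _ Hvd Ld); ring.
Qed.

Variables (E I : {set 'I_N}).
Definition PP (x : 'I_N -> R) := (forall i, i \in E -> x i = 0) /\ (forall i, i \in I -> 0 <= x i).
Definition supp (x : 'I_N -> R) := [set i | x i != 0].

Lemma LF_supp x : LF (supp x) x.
Proof. by move=> i; rewrite inE negbK => /eqP. Qed.

Lemma step x d i0 : PP x -> LF (supp x) d -> i0 \in I -> d i0 < 0 ->
  exists t, [/\ 0 < t, t * (- d i0) <= x i0, PP (shift x t d) &
             (#|supp (shift x t d)| < #|supp x|)%N].
Proof.
move=> [PE PI] Ld Ii0 di0.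
have J0 : (i0 \in I) && (d i0 < 0) by rewrite Ii0 di0.
case: (@arg_minP _ _ _ i0 (fun j => (j \in I) && (d j < 0)) (fun j => x j / - d j) J0).
move=> j /andP[Ij dj] jmin.
have jS : j \in supp x.
  apply: contraT => /Ld dj0; move: dj; by rewrite dj0 ltxx.
have xj : 0 < x j.
  by move: jS; rewrite inE lt_def => ->; rewrite PI.
have ndj : 0 < - d j by rewrite oppr_gt0.
exists (x j / - d j); split.
- exact: divr_gt0.
- by rewrite -ler_pdivlMr ?oppr_gt0 //; exact: jmin.
- split => i Hi.
    have xi0 := PE i Hi.
    have : i \notin supp x by rewrite inE negbK xi0.
    by move/Ld; rewrite /shift xi0 => ->; rewrite mulr0 addr0.
  case: (leP 0 (d i)) => di.
    by rewrite /shift addr_ge0 ?PI // mulr_ge0 // ?divr_ge0 // ltW.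
  have := jmin i; rewrite Hi di => /(_ isT).
  rewrite ler_pdivlMr ?oppr_gt0 // /shift => h; lra.
- apply: proper_card; apply/properP; split.
    apply/fintype.subsetP => i; rewrite !inE; apply: contraNN => /eqP xi0.
    have : i \notin supp x by rewrite inE negbK xi0.
    by move/Ld; rewrite /shift xi0 => ->; rewrite mulr0 addr0.
  exists j => //; rewrite inE negbK /shift.
  by apply/eqP; field; rewrite lt_eqF.
Qed.

Definition goodz F z := [/\ LF F z, PP z & forall y, LF F y -> hh y <= hh z].

Hypothesis bnd : exists M, forall x, PP x -> hh x <= M.

Lemma claim_step x : PP x ->
  (forall x', PP x' -> (#|supp x'| < #|supp x|)%N -> exists F z, goodz F z /\ hh x' <= hh z) ->
  exists F z, goodz F z /\ hh x <= hh z.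
Proof.
move=> Px IH; have [PE PI] := Px.
have Lx := LF_supp x.
have EF : forall i, i \in E -> i \notin supp x by move=> i /PE xi; rewrite inE negbK xi.
case: (dich (supp x)) => [[z [Lz zmax]]|[d [Ld [a a0 ha]]]].
- case: (pselect (PP z)) => Pz.
    by exists (supp x), z; split; [split => // | exact: zmax].
  have [i0 [Ii0 zi0]] : exists i0, i0 \in I /\ z i0 < 0.
    case: (pselect (exists i0, i0 \in I /\ z i0 < 0)) => // nex; exfalso; apply: Pz.
    split => i Hi; first exact: Lz (EF i Hi).
    rewrite leNgt; apply/negP => zl; apply: nex; by exists i.
  pose d := fun i => z i - x i.
  have Ld : LF (supp x) d by move=> i iS; rewrite /d Lz // Lx // subrr.
  have di0 : d i0 < 0 by have := PI i0 Ii0; rewrite /d; lra.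
  have [t [t0 tle Pxt card]] := @step _ _ _ Px Ld Ii0 di0.
  have t1 : t < 1.
    have := PI i0 Ii0; move: tle; rewrite /d => tle xi0.
    have : t * (x i0 - z i0) < 1 * (x i0 - z i0) by lra.
    by rewrite ltr_pM2r //; lra.
  have [F [z' [gz hz]]] := IH _ Pxt card.
  exists F, z'; split => //; apply: le_trans hz.
  have hz1 : hh z = hh (shift x 1 d) by congr hh; apply/funext => i; rewrite /shift /d; ring.
  have := zmax x Lx; rewrite hz1 !hh_shift => h1.
  have q0 := Hpsd d.
  set g := lf d - 2 * qf x d in h1 *; set q := qf d d in h1 q0 *.
  have h2 : 0 <= t * (g - q) by apply: mulr_ge0; lra.
  have h3 : 0 <= t * (1 - t) * q by apply: mulr_ge0 => //; apply: mulr_ge0; lra.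
  have -> : hh x + t * g - t ^ 2 * q = hh x + (t * (g - q) + t * (1 - t) * q) by ring.
  lra.
- case: (pselect (exists i0, i0 \in I /\ d i0 < 0)) => [[i0 [Ii0 di0]]|nex].
    have [t [t0 tle Pxt card]] := @step _ _ _ Px Ld Ii0 di0.
    have [F [z' [gz hz]]] := IH _ Pxt card.
    exists F, z'; split => //; apply: le_trans hz.
    rewrite ha //; have := mulr_gt0 t0 a0; lra.
  exfalso; have [M HM] := bnd.
  pose t := `|M - hh x| / a + 1.
  have t0 : 0 <= t by rewrite /t addr_ge0 // divr_ge0 // ltW.
  have : PP (shift x t d).
    split => i Hi.
      by rewrite /shift (PE i Hi) (Ld i (EF i Hi)) mulr0 addr0.
    rewrite /shift addr_ge0 ?PI // mulr_ge0 //.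
    by rewrite leNgt; apply/negP => dl; apply: nex; exists i.
  move/HM; rewrite ha // /t mulrDl mul1r divfK ?gt_eqF //.
  have := ler_norm (M - hh x); lra.
Qed.

Lemma claim m x : PP x -> (#|supp x| <= m)%N -> exists F z, goodz F z /\ hh x <= hh z.
Proof.
elim: m x => [|m IHm] x Px Hs; apply: claim_step => // x' Px' Hc.
  by move: Hs Hc; rewrite leqn0 => /eqP ->.
by apply: IHm => //; rewrite -ltnS; exact: leq_trans Hc Hs.
Qed.

Lemma attain : exists xs, PP xs /\ forall x, PP x -> hh x <= hh xs.
Proof.
have P0 : PP (fun _ => 0) by split.
have [F0 [z0 [g0 _]]] := @claim _ _ P0 (leqnn _).
pose zz F := match pselect (exists z, goodz F z) with
             | left e => proj1_sig (cid e) | right _ => fun _ => 0 end.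
have zzP : forall F, (exists z, goodz F z) -> goodz F (zz F).
  move=> F e; rewrite /zz; case: pselect => // e'; exact: (proj2_sig (cid e')).
pose good := fun F : {set 'I_N} => `[< exists z, goodz F z >].
have gF0 : good F0 by apply/asboolP; exists z0.
case: (@arg_maxP _ _ _ F0 good (fun F => hh (zz F)) gF0) => Fs gFs Fmax.
have [Lzs Pzs _] := zzP Fs (asboolW gFs).
exists (zz Fs); split => // x Px.
have [F [z [[Lz Pz zmax] hz]]] := @claim _ _ Px (leqnn _).
have gF : good F by apply/asboolP; exists z.
have [LzF _ zFmax] := zzP F (asboolW gF).
apply: le_trans hz _; apply: le_trans (zFmax z Lz) _; exact: Fmax.
Qed.

End Abs.
Section Ten.
Variables (R : realType) (K : nat) (n : 'I_K -> nat).

Lemma refl_matchT (T : Type) (P : Prop) (b : bool) (r : reflect P b)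
  (G : P -> T) (F : ~ P -> T) v :
  (forall e, G e = v) -> (forall ne, F ne = v) ->
  match r with ReflectT e => G e | ReflectF ne => F ne end = v.
Proof. by case: r. Qed.

Lemma merge_k (k : 'I_K) (a : 'I_(n k)) (c : coli n k) : Defs.merge a c k = a.
Proof.
rewrite /Defs.merge ffunE.
apply: (@refl_matchT _ _ _ (k =P k) (fun e => eq_rect_r (fun j => 'I_(n j)) a e)).
  by move=> e; rewrite (eq_irrelevance e (erefl k)).
by move=> ne; case: ne.
Qed.

Lemma merge_j (k : 'I_K) (a : 'I_(n k)) (c : coli n k) j (h : j != k) :
  Defs.merge a c j = c (exist _ j h).
Proof.
rewrite /Defs.merge ffunE.
apply: (@refl_matchT _ _ _ (j =P k)).
  by move=> e; exfalso; move/eqP: h; apply.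
by move=> ne; rewrite (bool_irrelevance (introN eqP ne) h).
Qed.

Definition splitk (k : 'I_K) (l : idx n) : coli n k :=
  @finfun _ (fun j : {j : 'I_K | j != k} => 'I_(n (val j))) (fun j => l (val j)).

Lemma merge_split k (l : idx n) : Defs.merge (l k) (splitk k l) = l.
Proof.
apply/ffunP => j; case: (eqVneq j k) => [->|h]; first by rewrite merge_k.
by rewrite (merge_j _ _ _ _ h) /splitk ffunE.
Qed.

Lemma split_merge k (a : 'I_(n k)) (c : coli n k) : splitk k (Defs.merge a c) = c.
Proof.
apply/ffunP => j; rewrite /splitk ffunE (merge_j _ _ _ _ (valP j)).
move: j => [j' hj]; set p := valP _; by rewrite (bool_irrelevance p hj).
Qed.

Lemma sum_idx k (F : idx n -> R) :
  \sum_l F l = \sum_(a < n k) \sum_(c < #|{: coli n k}|) F (Defs.merge a (enum_val c)).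
Proof.
transitivity (\sum_(a < n k) \sum_(c : coli n k) F (Defs.merge a c)); last first.
  by apply: eq_bigr => a _; rewrite big_enum_val.
rewrite pair_big /=.
rewrite (reindex (fun p : 'I_(n k) * coli n k => Defs.merge p.1 p.2)) //=.
apply: onW_bij; exists (fun l : idx n => (l k, splitk k l)).
  by case=> a c /=; rewrite merge_k split_merge.
by move=> l /=; rewrite merge_split.
Qed.

Definition foldk k (M : 'M[R]_(n k, #|{: coli n k}|)) : tensor R n :=
  fun l => M (l k) (enum_rank (splitk k l)).

Lemma unfoldK k (M : 'M[R]_(n k, #|{: coli n k}|)) : unfold k (foldk k M) = M.
Proof.
by apply/matrixP => a c; rewrite mxE /foldk merge_k split_merge enum_valK.
Qed.

Lemma mxdot_unfold k (A B : tensor R n) : mxdot (unfold k A) (unfold k B) = tdot A B.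
Proof.
rewrite /tdot (sum_idx k) /mxdot; apply: eq_bigr => a _; apply: eq_bigr => c _.
by rewrite !mxE.
Qed.

Lemma mxdot_fold k (A : tensor R n) (M : 'M[R]_(n k, #|{: coli n k}|)) : mxdot (unfold k A) M = tdot A (foldk k M).
Proof. by rewrite -(mxdot_unfold k) unfoldK. Qed.

Lemma unfoldD k (A B : tensor R n) : unfold k (fun i => A i + B i) = unfold k A + unfold k B.
Proof. by apply/matrixP => a c; rewrite !mxE. Qed.

Lemma unfoldZ k t (A : tensor R n) : unfold k (fun i => t * A i) = t *: unfold k A.
Proof. by apply/matrixP => a c; rewrite !mxE. Qed.

End Ten.

Lemma mxdot_tr (R : realType) p q (A B : 'M[R]_(p, q)) : mxdot A B = \tr (A *m B^T).
Proof.
rewrite /mxtrace /mxdot; apply: eq_bigr => i _; rewrite !mxE; apply: eq_bigr => j _.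
by rewrite !mxE.
Qed.

Lemma mxdotC (R : realType) p q (A B : 'M[R]_(p, q)) : mxdot A B = mxdot B A.
Proof. by rewrite /mxdot; apply: eq_bigr => i _; apply: eq_bigr => j _; rewrite mulrC. Qed.

Lemma mxdotDl (R : realType) p q (A B C : 'M[R]_(p, q)) : mxdot (A + B) C = mxdot A C + mxdot B C.
Proof.
rewrite /mxdot -big_split; apply: eq_bigr => i _; rewrite -big_split.
by apply: eq_bigr => j _; rewrite mxE mulrDl.
Qed.

Lemma mxdotZl (R : realType) p q t (A C : 'M[R]_(p, q)) : mxdot (t *: A) C = t * mxdot A C.
Proof.
rewrite /mxdot mulr_sumr; apply: eq_bigr => i _; rewrite mulr_sumr.
by apply: eq_bigr => j _; rewrite mxE mulrA.
Qed.

Lemma mxdotDr (R : realType) p q (A B C : 'M[R]_(p, q)) : mxdot C (A + B) = mxdot C A + mxdot C B.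
Proof. by rewrite !(mxdotC _ _ _ C) mxdotDl. Qed.

Lemma mxdotZr (R : realType) p q t (A C : 'M[R]_(p, q)) : mxdot C (t *: A) = t * mxdot C A.
Proof. by rewrite !(mxdotC _ _ _ C) mxdotZl. Qed.

Lemma mxdot_sym (R : realType) d q (Th : 'M[R]_d) (A B : 'M[R]_(d, q)) : Th^T = Th ->
  mxdot A (Th *m B) = mxdot B (Th *m A).
Proof.
move=> sy; rewrite !mxdot_tr !trmx_mul sy mxtrace_mulC -mulmxA.
by rewrite -mxtrace_tr !trmx_mul trmxK sy mxtrace_mulC.
Qed.

Lemma mxdot_psd (R : realType) d q (Th : 'M[R]_d) (A : 'M[R]_(d, q)) : psd Th ->
  0 <= mxdot A (Th *m A).
Proof.
move=> [sy pos]; rewrite mxdotC mxdot_tr mxtrace_mulC mulmxA.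
rewrite /mxtrace; apply: sumr_ge0 => j _.
have := pos (col j A); congr (0 <= _).
rewrite !mxE; apply: eq_bigr => i _; rewrite !mxE; congr (_ * _).
  by apply: eq_bigr => k _; rewrite !mxE.
Qed.
Lemma gram_unit (R : realType) r d (M : 'M[R]_(r, d)) : row_free M -> M *m M^T \in unitmx.
Proof.
move=> rf; rewrite -row_free_unit -kermx_eq0; apply/eqP/row_matrixP => i.
rewrite row0; set v := row i _.
have vK : v *m (M *m M^T) = 0.
  by apply/sub_kermxP; rewrite /v row_sub.
have vM : v *m M = 0.
  have e : (v *m M *m (v *m M)^T) 0 0 = 0.
    by rewrite trmx_mul mulmxA -(mulmxA v) vK mul0mx mxE.
  move: e; rewrite mxE => e.
  apply/matrixP => a j; rewrite ord1 [RHS]mxE.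
  have h : (v *m M) 0 j * (v *m M)^T j 0 = 0.
    apply: (@psumr_eq0P _ _ predT (fun j => (v *m M) 0 j * (v *m M)^T j 0)) => //.
    by move=> k _; rewrite [X in _ * X]mxE -expr2 sqr_ge0.
  by move: h; rewrite [X in _ * X]mxE => /eqP; rewrite mulf_eq0 orbb => /eqP.
have : (v <= kermx M)%MS by apply/sub_kermxP.
have /eqP k0 : kermx M == 0 by rewrite kermx_eq0.
by rewrite k0 submx0 => /eqP.
Qed.

Lemma MP_exists (R : realType) d (A : 'M[R]_d) : exists X, is_MP A X.
Proof.
set B := col_base A; set Cm := row_base A.
have AE : A = B *m Cm by rewrite mulmx_base.
set G1 := Cm *m Cm^T; set G2 := B^T *m B.
have u1 : G1 \in unitmx by apply: gram_unit; exact: row_base_free.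
have u2 : G2 \in unitmx.
  rewrite /G2 -{2}(trmxK B); apply: gram_unit.
  by rewrite /row_free mxrank_tr; have := col_base_full A; rewrite /row_full.
clearbody B Cm.
have s1 : (invmx G1)^T = invmx G1 by rewrite trmx_inv /G1 trmx_mul trmxK.
have s2 : (invmx G2)^T = invmx G2 by rewrite trmx_inv /G2 trmx_mul trmxK.
have G1E : Cm *m Cm^T = G1 by [].
have G2E : B^T *m B = G2 by [].
clearbody G1 G2.
suff : exists X, is_MP (B *m Cm) X by rewrite -AE.
pose X := Cm^T *m invmx G1 *m invmx G2 *m B^T.
have AX : B *m Cm *m X = B *m invmx G2 *m B^T.
  by rewrite /X !mulmxA -(mulmxA B Cm) G1E mulmxK.
have XA : X *m (B *m Cm) = Cm^T *m invmx G1 *m Cm.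
  by rewrite /X !mulmxA -(mulmxA _ B^T B) G2E mulmxKV.
exists X; split.
- by rewrite AX !mulmxA -(mulmxA _ B^T B) G2E mulmxKV.
- by rewrite XA /X !mulmxA -(mulmxA _ Cm Cm^T) G1E mulmxK.
- by rewrite AX !trmx_mul trmxK s2 mulmxA.
- by rewrite XA !trmx_mul trmxK s1 mulmxA.
Qed.

Lemma MPinvP (R : realType) d (A : 'M[R]_d) : A *m MPinv A *m A = A.
Proof.
have [X HX] := MP_exists _ _ A.
have : is_MP A (MPinv A) by apply: (@xgetPex _ 0 [set X | is_MP A X]); exists X.
by case.
Qed.
Arguments foldk {R K n} k M _.
Arguments unfoldK {R K n} k M.
Arguments mxdot_fold {R K n} k A M.
Arguments mxdot_unfold {R K n} k A B.
Arguments unfoldD {R K n} k A B.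
Arguments unfoldZ {R K n} k t A.
Arguments mxdot_psd {R d q} Th A _.
Arguments mxdot_sym {R d q} Th A B _.
Arguments mxdotC {R p q} A B.
Arguments mxdotDl {R p q} A B C.
Arguments mxdotDr {R p q} A B C.
Arguments mxdotZl {R p q} t A C.
Arguments mxdotZr {R p q} t A C.
Arguments mxdot_tr {R p q} A B.
Arguments MPinvP {R d} A.
Arguments PP {R N} E I x.
Arguments hh {R N} H b x.
Arguments qf {R N} H x y.
Arguments lf {R N} b x.
Arguments Hv {R N} H x i.
Arguments shift {R N} x t d _.
Arguments hh_shift {R N H b} Hsym x t d.
Arguments attain {R N H b} Hsym Hpsd E I _.

Lemma lin_expand (R : realType) (N : nat) (f : ('I_N -> R) -> R) :
  (forall x y, f (fun j => x j + y j) = f x + f y) ->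
  (forall a x, f (fun j => a * x j) = a * f x) ->
  forall x, f x = \sum_i x i * f (fun j => (i == j)%:R).
Proof.
move=> fD fZ x.
have f0 : f (fun _ => 0) = 0.
  transitivity (0 * f (fun _ => 0 : R)); last by rewrite mul0r.
  by rewrite -fZ; congr f; apply/funext => j; rewrite mul0r.
have gen : forall s : seq 'I_N, f (fun j => \sum_(i <- s) x i * (i == j)%:R)
    = \sum_(i <- s) x i * f (fun j => (i == j)%:R).
  elim => [|i s IH]; first by rewrite big_nil -f0; congr f; apply/funext => j; rewrite big_nil.
  rewrite big_cons -IH -fZ -fD; congr f; apply/funext => j; by rewrite big_cons.
rewrite -gen; congr f; apply/funext => j.
rewrite (bigD1 j) //= eqxx mulr1 big1 ?addr0 // => i /negbTE ->; by rewrite mulr0.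
Qed.

Section TD.
Variables (R : realType) (K : nat) (n : 'I_K -> nat).
Implicit Types (A B D : tensor R n).

Lemma tdotC A B : tdot A B = tdot B A.
Proof. by apply: eq_bigr => i _; rewrite mulrC. Qed.

Lemma tdotDl A B D : tdot (fun i => A i + B i) D = tdot A D + tdot B D.
Proof. by rewrite /tdot -big_split; apply: eq_bigr => i _; rewrite mulrDl. Qed.

Lemma tdotZl a A D : tdot (fun i => a * A i) D = a * tdot A D.
Proof. by rewrite /tdot mulr_sumr; apply: eq_bigr => i _; rewrite mulrA. Qed.

Lemma tdot_suml (F : 'I_K -> tensor R n) D :
  tdot D (fun l => \sum_k F k l) = \sum_k tdot D (F k).
Proof.
rewrite /tdot exchange_big /=; apply: eq_bigr => i _; by rewrite mulr_sumr.
Qed.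

Lemma tnorm2_ge0 A : 0 <= tnorm2 A.
Proof. by apply: sumr_ge0 => i _; rewrite -expr2 sqr_ge0. Qed.

Lemma tdot_delta (l : idx n) s A : tdot (fun i => s * (l == i)%:R) A = s * A l.
Proof.
rewrite /tdot (bigD1 l) //= eqxx mulr1 big1 ?addr0 // => i; rewrite eq_sym => /negbTE ->.
by rewrite mulr0 mul0r.
Qed.
End TD.

Lemma first_order (R : realType) (g q : R) : 0 <= q ->
  (forall t, 0 < t -> t <= 1 -> t * g - t ^ 2 * q <= 0) -> g <= 0.
Proof.
move=> q0 H; rewrite leNgt; apply/negP => g0.
have gq : 0 < g + q by lra.
have t0 : 0 < g / (g + q) by exact: divr_gt0.
have t1 : g / (g + q) <= 1 by rewrite ler_pdivrMr // mul1r; lra.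
have := H _ t0 t1.
have -> : g / (g + q) * g - (g / (g + q)) ^ 2 * q = g ^ 3 / (g + q) ^ 2.
  by field; rewrite gt_eqF.
by rewrite leNgt => /negP; apply; apply: divr_gt0; apply: exprn_gt0.
Qed.

Section Main.
Variables (R : realType) (K : nat) (n : 'I_K -> nat) (Om : {set idx n})
  (Y : tensor R n) (C : R) (lam : 'I_K -> R) (Th : forall k, 'M[R]_(n k)).
Hypotheses (HY : Y = restr Om Y) (C0 : 0 < C) (lam0 : forall k, 0 < lam k)
  (HTh : forall k, Pset (Th k)).

Let sym k : (Th k)^T = Th k. Proof. by case: (HTh k) => [[]]. Qed.
Let psdk k : psd (Th k). Proof. by case: (HTh k). Qed.

Definition qk k (X : tensor R n) := mxdot (unfold k X) (Th k *m unfold k X).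
Definition Vt (X : tensor R n) : tensor R n :=
  fun l => \sum_k lam k * foldk k (Th k *m unfold k X) l.

Lemma qk_ge0 k X : 0 <= qk k X.
Proof. exact: mxdot_psd. Qed.

Lemma YOm l : l \notin Om -> Y l = 0.
Proof. by move=> h; rewrite HY /restr (negbTE h). Qed.

Lemma pinv_range k (G : 'M[R]_(n k, #|{: coli n k}|)) :
  mxdot (MPinv (Th k) *m (Th k *m G)) (Th k *m G) = mxdot G (Th k *m G).
Proof.
rewrite !mxdot_tr !trmx_mul (sym k).
rewrite (mulmxA (MPinv _ *m _) G^T) mxtrace_mulC !mulmxA MPinvP.
by rewrite -mulmxA mxtrace_mulC.
Qed.

Lemma bq_expand k (A B : 'M[R]_(n k, #|{: coli n k}|)) t :
  mxdot (A + t *: B) (Th k *m (A + t *: B)) =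
  mxdot A (Th k *m A) + 2 * t * mxdot B (Th k *m A) + t ^ 2 * mxdot B (Th k *m B).
Proof.
rewrite mulmxDr -scalemxAr !mxdotDl !mxdotDr !mxdotZl !mxdotZr.
rewrite (mxdot_sym _ A B (sym k)); ring.
Qed.

Lemma term_bound k (W X : tensor R n) :
  ((unfold k W)^T <= (Th k)^T)%MS ->
  mxdot (unfold k X) (unfold k W) - lam k / 2 * qk k X <=
  1 / (2 * lam k) * mxdot (MPinv (Th k) *m unfold k W) (unfold k W).
Proof.
case/submxP => D e.
have -> : unfold k W = Th k *m D^T by rewrite -[unfold k W]trmxK e trmx_mul trmxK.
rewrite pinv_range /qk; set G := D^T; set U := unfold k X.
have h2 := mxdot_psd _ U (psdk k).
have h1 := mxdot_psd _ (G + (- lam k) *: U) (psdk k).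
rewrite bq_expand (mxdot_sym _ U G (sym k)) in h1.
have l0 := lam0 k.
set a := mxdot G (Th k *m G) in h1 *; set bb := mxdot G (Th k *m U) in h1 *.
set c := mxdot U (Th k *m U) in h1 h2 *.
have h3 : 0 <= 1 / (2 * lam k) * (a + 2 * - lam k * bb + (- lam k) ^ 2 * c).
  by apply: mulr_ge0 => //; rewrite divr_ge0 // mulr_ge0 // ltW.
have e2 : 1 / (2 * lam k) * (a + 2 * - lam k * bb + (- lam k) ^ 2 * c) =
   1 / (2 * lam k) * a - bb + lam k / 2 * c.
  by field; rewrite gt_eqF.
rewrite (mxdot_sym _ U G (sym k)) -/bb; lra.
Qed.


Lemma dualE (Z S : tensor R n) : dual_obj Om Y C lam Th Z S =
  tdot Z Y - 1 / (4 * C) * tnorm2 Z - \sum_k lam k / 2 * qk k (fun l => Z l + S l).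
Proof.
rewrite /dual_obj -HY; congr (_ - _); apply: eq_bigr => k _.
by rewrite /qk unfoldD.
Qed.

Lemma weak_real (Z S : tensor R n) (Wk : 'I_K -> tensor R n) (t : 'I_K -> R) :
  Z = restr Om Z -> tnonneg S -> tnonneg (fun i => \sum_k Wk k i) ->
  (forall k, mxdot (unfold k (fun l => Z l + S l)) (unfold k (Wk k))
             - lam k / 2 * qk k (fun l => Z l + S l) <= t k) ->
  dual_obj Om Y C lam Th Z S <=
  C * tnorm2 (fun i => restr Om (fun i => \sum_k Wk k i) i - restr Om Y i) + \sum_k t k.
Proof.
move=> HZ HS HW Ht; rewrite dualE.
set X := fun l => Z l + S l; set W := fun i => \sum_k Wk k i.
have h1 : tdot X W - \sum_k lam k / 2 * qk k X <= \sum_k t k.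
  rewrite /W tdot_suml -sumrB; apply: ler_sum => k _.
  by rewrite -(mxdot_unfold k); exact: Ht.
have h2 : 0 <= tdot S W by apply: sumr_ge0 => i _; apply: mulr_ge0; [exact: HS | exact: HW].
have h3 : tdot X W = tdot Z W + tdot S W by rewrite /X tdotDl.
have key : tdot Z Y - 1 / (4 * C) * tnorm2 Z - tdot Z W <=
    C * tnorm2 (fun i => restr Om W i - restr Om Y i).
  rewrite /tnorm2 /tdot !mulr_sumr -!sumrB; apply: ler_sum => l _.
  rewrite /restr; case: (boolP (l \in Om)) => lO.
    have e : C * ((W l - Y l) * (W l - Y l)) - (Z l * Y l - 1 / (4 * C) * (Z l * Z l) - Z l * W l)
      = (2 * C * (W l - Y l) + Z l) ^ 2 / (4 * C) by field; rewrite gt_eqF.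
    have : 0 <= (2 * C * (W l - Y l) + Z l) ^ 2 / (4 * C).
      by rewrite divr_ge0 ?sqr_ge0 // mulr_ge0 // ltW.
    lra.
  have -> : Z l = 0 by rewrite HZ /restr (negbTE lO).
  lra.
lra.
Qed.

Lemma weak (Z S : tensor R n) (Wk : 'I_K -> tensor R n) :
  Z = restr Om Z -> tnonneg S ->
  ((dual_obj Om Y C lam Th Z S)%:E <= primal_obj Om Y C lam Th Wk)%E.
Proof.
move=> HZ HS; rewrite /primal_obj /=; case: asboolP => HW; last by rewrite leey.
set X := fun l => Z l + S l.
pose t k := mxdot (unfold k X) (unfold k (Wk k)) - lam k / 2 * qk k X.
apply: (@le_trans _ _ (C * tnorm2 (fun i => restr Om (fun i => \sum_k Wk k i) i
   - restr Om Y i) + \sum_k t k)%:E).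
  by rewrite lee_fin; apply: weak_real => // k; rewrite /t.
rewrite EFinD -sumEFin; apply: leeD2l; apply: lee_sum => k _.
rewrite /pinv_quad; case: ifP => hr.
  by rewrite -EFinM lee_fin /t; exact: term_bound.
have l0 := lam0 k.
rewrite mulry gtr0_sg ?mul1e ?leey //.
by rewrite divr_gt0 // mulr_gt0.
Qed.

Definition Tt := (idx n + idx n)%type.
Definition Nn := #|{: Tt}|.
Definition Zx (x : 'I_Nn -> R) : tensor R n := fun l => x (enum_rank (inl l : Tt)).
Definition Sx (x : 'I_Nn -> R) : tensor R n := fun l => x (enum_rank (inr l : Tt)).
Definition Xx (x : 'I_Nn -> R) : tensor R n := fun l => Zx x l + Sx x l.
Definition enc (Z S : tensor R n) : 'I_Nn -> R :=
  fun j => match enum_val j with inl l => Z l | inr l => S l end.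

Lemma Zx_enc Z S : Zx (enc Z S) = Z.
Proof. by apply/funext => l; rewrite /Zx /enc enum_rankK. Qed.
Lemma Sx_enc Z S : Sx (enc Z S) = S.
Proof. by apply/funext => l; rewrite /Sx /enc enum_rankK. Qed.

Definition Eset : {set 'I_Nn} :=
  [set j | match enum_val j with inl l => l \notin Om | inr _ => false end].
Definition Iset : {set 'I_Nn} :=
  [set j | match enum_val j with inl _ => false | inr _ => true end].

Lemma PP_feas x : PP Eset Iset x -> Zx x = restr Om (Zx x) /\ tnonneg (Sx x).
Proof.
case=> PE PI; split.
  apply/funext => l; rewrite /restr; case: ifP => // /negbT lO.
  by apply: PE; rewrite inE enum_rankK.
by move=> l; apply: PI; rewrite inE enum_rankK.
Qed.

Lemma feas_PP Z S : Z = restr Om Z -> tnonneg S -> PP Eset Iset (enc Z S).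
Proof.
move=> HZ HS; split => j; rewrite inE /enc; case: (enum_val j) => // l.
by move=> lO; rewrite HZ /restr (negbTE lO).
Qed.

Definition Bq (x y : 'I_Nn -> R) := 1 / (4 * C) * tdot (Zx x) (Zx y) +
  \sum_k lam k / 2 * mxdot (unfold k (Xx x)) (Th k *m unfold k (Xx y)).
Definition lin (x : 'I_Nn -> R) := tdot (Zx x) Y.

Lemma unfold_XxD k x y :
  unfold k (Xx (fun j => x j + y j)) = unfold k (Xx x) + unfold k (Xx y).
Proof. by apply/matrixP => a c; rewrite !mxE /Xx /Zx /Sx; ring. Qed.

Lemma unfold_XxZ k a x :
  unfold k (Xx (fun j => a * x j)) = a *: unfold k (Xx x).
Proof. by apply/matrixP => a' c; rewrite !mxE /Xx /Zx /Sx; ring. Qed.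

Lemma BqC x y : Bq x y = Bq y x.
Proof.
rewrite /Bq tdotC; congr (_ + _); apply: eq_bigr => k _.
by rewrite (mxdot_sym _ _ _ (sym k)).
Qed.

Lemma BqDl x y z : Bq (fun j => x j + y j) z = Bq x z + Bq y z.
Proof.
rewrite /Bq.
have -> : Zx (fun j => x j + y j) = fun l => Zx x l + Zx y l by [].
rewrite tdotDl.
under eq_bigr do rewrite unfold_XxD mxdotDl mulrDr.
rewrite big_split /=; ring.
Qed.

Lemma BqZl a x z : Bq (fun j => a * x j) z = a * Bq x z.
Proof.
rewrite /Bq.
have -> : Zx (fun j => a * x j) = fun l => a * Zx x l by [].
rewrite tdotZl.
under eq_bigr do rewrite unfold_XxZ mxdotZl.
rewrite mulrDr mulr_sumr; congr (_ + _); first ring.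
by apply: eq_bigr => k _; ring.
Qed.

Lemma BqDr x y z : Bq z (fun j => x j + y j) = Bq z x + Bq z y.
Proof. by rewrite BqC BqDl !(BqC z). Qed.

Lemma BqZr a x z : Bq z (fun j => a * x j) = a * Bq z x.
Proof. by rewrite BqC BqZl (BqC z). Qed.

Lemma Bq_ge0 x : 0 <= Bq x x.
Proof.
apply: addr_ge0.
  by apply: mulr_ge0; [rewrite divr_ge0 // mulr_ge0 // ltW | exact: tnorm2_ge0].
apply: sumr_ge0 => k _; apply: mulr_ge0; last exact: mxdot_psd.
by rewrite divr_ge0 // ltW.
Qed.

Lemma linD x y : lin (fun j => x j + y j) = lin x + lin y.
Proof. exact: tdotDl. Qed.
Lemma linZ a x : lin (fun j => a * x j) = a * lin x.
Proof. exact: tdotZl. Qed.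

Definition delta (i : 'I_Nn) : 'I_Nn -> R := fun j => (i == j)%:R.
Definition Hm (i j : 'I_Nn) := Bq (delta i) (delta j).
Definition bv (i : 'I_Nn) := lin (delta i).

Lemma Hm_sym i j : Hm i j = Hm j i.
Proof. exact: BqC. Qed.

Lemma qfE x y : qf Hm x y = Bq x y.
Proof.
rewrite /qf (@lin_expand _ _ (fun x => Bq x y) (fun x1 x2 => BqDl x1 x2 y)
   (fun a x1 => BqZl a x1 y)).
apply: eq_bigr => i _; congr (_ * _).
rewrite (@lin_expand _ _ (fun y => Bq (delta i) y) (fun y1 y2 => BqDr y1 y2 _)
   (fun a y1 => BqZr a y1 _)).
by rewrite /Hv; apply: eq_bigr => j _; rewrite mulrC.
Qed.

Lemma lfE x : lf bv x = lin x.
Proof.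
rewrite (@lin_expand _ _ lin linD linZ x) /lf; apply: eq_bigr => i _; by rewrite mulrC.
Qed.

Lemma Hpsd x : 0 <= qf Hm x x.
Proof. by rewrite qfE; exact: Bq_ge0. Qed.

Lemma hhE x : hh Hm bv x = dual_obj Om Y C lam Th (Zx x) (Sx x).
Proof.
rewrite /hh lfE qfE dualE /lin /Bq.
have -> : \sum_k lam k / 2 * qk k (fun l => Zx x l + Sx x l) =
  \sum_k lam k / 2 * mxdot (unfold k (Xx x)) (Th k *m unfold k (Xx x)) by [].
rewrite /tnorm2; ring.
Qed.

Lemma unfold0 k : unfold k (fun _ : idx n => (0:R)) = 0.
Proof. by apply/matrixP => a c; rewrite !mxE. Qed.

Lemma bnd : exists M, forall x, PP Eset Iset x -> hh Hm bv x <= M.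
Proof.
exists (C * tnorm2 (fun i => restr Om (fun i => \sum_(k < K) (0:R)) i - restr Om Y i)
        + \sum_(k < K) (0:R)).
move=> x Px; rewrite hhE; have [HZ HS] := PP_feas _ Px.
apply: (@weak_real _ _ (fun _ _ => 0) (fun _ => 0)) => //.
  by move=> i; apply: sumr_ge0.
move=> k; rewrite unfold0.
have -> : forall A : 'M[R]_(n k, #|{: coli n k}|), mxdot A 0 = 0.
  by move=> A; rewrite /mxdot big1 // => a _; rewrite big1 // => c _; rewrite mxE mulr0.
have := qk_ge0 k (fun l => Zx x l + Sx x l); have := lam0 k.
move=> l0 q0; have : 0 <= lam k / 2 * qk k (fun l => Zx x l + Sx x l).
  by apply: mulr_ge0 => //; rewrite divr_ge0 // ltW.
lra.
Qed.

Lemma expansion x t D E :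
  dual_obj Om Y C lam Th (fun l => Zx x l + t * D l) (fun l => Sx x l + t * E l) =
  dual_obj Om Y C lam Th (Zx x) (Sx x) + t * (lin (enc D E) - 2 * Bq x (enc D E))
  - t ^ 2 * Bq (enc D E) (enc D E).
Proof.
have := @hh_shift _ _ Hm bv Hm_sym x t (enc D E).
rewrite !hhE lfE !qfE.
have -> : Zx (shift x t (enc D E)) = fun l => Zx x l + t * D l.
  by apply/funext => l; rewrite /Zx /shift /enc enum_rankK.
have -> : Sx (shift x t (enc D E)) = fun l => Sx x l + t * E l.
  by apply/funext => l; rewrite /Sx /shift /enc enum_rankK.
by [].
Qed.

Lemma tdot_Vt A X : tdot A (Vt X) = \sum_k lam k * tdot A (foldk k (Th k *m unfold k X)).
Proof.
rewrite /Vt tdot_suml; apply: eq_bigr => k _.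
by rewrite tdotC tdotZl tdotC.
Qed.

Lemma gradE x D E :
  lin (enc D E) - 2 * Bq x (enc D E) =
  tdot D Y - 1 / (2 * C) * tdot (Zx x) D - tdot (fun l => D l + E l) (Vt (Xx x)).
Proof.
have XE : Xx (enc D E) = fun l => D l + E l.
  by apply/funext => l; rewrite /Xx Zx_enc Sx_enc.
rewrite /lin /Bq Zx_enc XE tdot_Vt.
under eq_bigr do rewrite (mxdot_sym _ _ _ (sym _)) mxdot_fold.
rewrite mulrDr.
have -> : 2 * (\sum_k (lam k / 2 * tdot (fun l => D l + E l)
     (foldk k (Th k *m unfold k (Xx x))))) =
   \sum_k lam k * tdot (fun l => D l + E l) (foldk k (Th k *m unfold k (Xx x))).
  by rewrite mulr_sumr; apply: eq_bigr => k _; field.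
have -> : 2 * (1 / (4 * C) * tdot (Zx x) D) = 1 / (2 * C) * tdot (Zx x) D.
  by field; rewrite gt_eqF.
ring.
Qed.

Lemma Bq_d_ge0 D E : 0 <= Bq (enc D E) (enc D E).
Proof. exact: Bq_ge0. Qed.

Lemma tdot0l A : tdot (fun _ : idx n => (0:R)) A = 0.
Proof. by rewrite /tdot big1 // => i _; rewrite mul0r. Qed.

Lemma strong : exists Wk (Zs Ss : tensor R n),
  [/\ Zs = restr Om Zs, tnonneg Ss &
      primal_obj Om Y C lam Th Wk = (dual_obj Om Y C lam Th Zs Ss)%:E].
Proof.
have [xs [Pxs xmax]] := @attain _ _ Hm bv Hm_sym Hpsd Eset Iset bnd.
have [HZs HSs] := PP_feas _ Pxs.
set Zs := Zx xs in HZs *; set Ss := Sx xs in HSs *.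
set X := Xx xs; set V := Vt X.
have dmax : forall Z S, Z = restr Om Z -> tnonneg S ->
    dual_obj Om Y C lam Th Z S <= dual_obj Om Y C lam Th Zs Ss.
  move=> Z S HZ HS; have := xmax _ (feas_PP _ _ HZ HS).
  by rewrite !hhE Zx_enc Sx_enc.
have fo : forall D E, (forall t, 0 < t -> t <= 1 ->
      (fun l => Zs l + t * D l) = restr Om (fun l => Zs l + t * D l) /\
      tnonneg (fun l => Ss l + t * E l)) ->
    tdot D Y - 1 / (2 * C) * tdot Zs D - tdot (fun l => D l + E l) V <= 0.
  move=> D E Hf; rewrite /V /X -gradE.
  apply: (@first_order _ _ _ (Bq_ge0 (enc D E))) => t t0 t1.
  have [h1 h2] := Hf t t0 t1; have := dmax _ _ h1 h2; rewrite expansion; lra.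
have Zs0 : forall l, l \notin Om -> Zs l = 0.
  by move=> l lO; rewrite HZs /restr (negbTE lO).
have stat : forall l, l \in Om -> V l = Y l - Zs l / (2 * C).
  move=> l lO.
  have hs : forall s, s * Y l - 1 / (2 * C) * (s * Zs l) - s * V l <= 0.
    move=> s; have := fo (fun i => s * (l == i)%:R) (fun _ => 0).
    have -> : (fun i => s * (l == i)%:R + 0) = (fun i => s * (l == i)%:R).
      by apply/funext => i; rewrite addr0.
    rewrite !tdot_delta tdotC tdot_delta; apply => t t0 t1; split.
      apply/funext => i; rewrite /restr; case: ifP => // /negbT iO.
      have li : (l == i) = false by apply: contraNF iO => /eqP <-.
      by rewrite li mulr0 mulr0 addr0 Zs0.
    by move=> i; rewrite mulr0 addr0.
  have := hs 1; have := hs (-1).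
  have e : Zs l / (2 * C) = 1 / (2 * C) * Zs l by rewrite mulrC mul1r.
  rewrite e; lra.
have Vge0 : forall l, 0 <= V l.
  move=> l; have := fo (fun _ => 0) (fun i => (l == i)%:R).
  have -> : (fun i => 0 + (l == i)%:R) = (fun i => 1 * (l == i)%:R :> R).
    by apply/funext => i; rewrite add0r mul1r.
  rewrite tdot0l tdotC tdot0l tdot_delta.
  have H1 : forall t, 0 < t -> t <= 1 ->
      (fun l => Zs l + t * 0) = restr Om (fun l => Zs l + t * 0) /\
      tnonneg (fun i => Ss i + t * (l == i)%:R).
    move=> t t0 t1; split.
      have -> : (fun l => Zs l + t * 0) = Zs by apply/funext => i; rewrite mulr0 addr0.
      exact: HZs.
    by move=> i; rewrite addr_ge0 // mulr_ge0 // ?ler0n // ltW.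
  move/(_ H1); lra.
have compl : tdot Ss V = 0.
  have H1 : forall s, -1 <= s -> forall t, 0 < t -> t <= 1 ->
      (fun l => Zs l + t * 0) = restr Om (fun l => Zs l + t * 0) /\
      tnonneg (fun i => Ss i + t * (s * Ss i)).
    move=> s s1 t t0 t1; split.
      have -> : (fun l => Zs l + t * 0) = Zs by apply/funext => i; rewrite mulr0 addr0.
      exact: HZs.
    move=> i; have := HSs i => si.
    have -> : Ss i + t * (s * Ss i) = (1 + t * s) * Ss i by ring.
    apply: mulr_ge0 => //; nra.
  have hs : forall s, -1 <= s -> - (s * tdot Ss V) <= 0.
    move=> s s1; have := fo (fun _ => 0) (fun i => s * Ss i).
    rewrite tdot0l tdotC tdot0l.
    have -> : (fun i => 0 + s * Ss i) = (fun i => s * Ss i).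
      by apply/funext => i; rewrite add0r.
    rewrite tdotZl; move/(_ (H1 s s1)); lra.
  have := hs 1; have := hs (-1); lra.
pose Wk := fun k l => lam k * foldk k (Th k *m unfold k X) l.
have WV : (fun i => \sum_k Wk k i) = V by [].
have UW : forall k, unfold k (Wk k) = Th k *m (lam k *: unfold k X).
  by move=> k; rewrite /Wk unfoldZ unfoldK scalemxAr.
have term : forall k, ((1 / (2 * lam k))%:E * pinv_quad (Th k) (unfold k (Wk k)))%E
    = (lam k / 2 * qk k X)%:E.
  move=> k; rewrite /pinv_quad UW trmx_mul submxMl pinv_range -EFinM.
  congr EFin; rewrite -scalemxAr mxdotZl mxdotZr /qk.
  by have := lam0 k => l0; field; rewrite gt_eqF.
exists Wk, Zs, Ss; split => //.
rewrite /primal_obj /= WV.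
have -> : `[< tnonneg V >] = true by apply/asboolP.
under eq_bigr do rewrite term.
rewrite sumEFin -EFinD; congr EFin.
rewrite dualE.
have ev : forall l, restr Om V l - restr Om Y l = - (Zs l / (2 * C)).
  move=> l; rewrite /restr; case: ifP => lO; first by rewrite stat //; ring.
  by rewrite (Zs0 l (negbT lO)); ring.
have F1 : C * tnorm2 (fun i => restr Om V i - restr Om Y i) = 1 / (4 * C) * tnorm2 Zs.
  rewrite /tnorm2 /tdot !mulr_sumr; apply: eq_bigr => l _; rewrite ev.
  by field; rewrite gt_eqF.
have F2 : \sum_k lam k / 2 * qk k X = tdot X V / 2.
  rewrite /V tdot_Vt mulr_suml; apply: eq_bigr => k _.
  by rewrite /qk mxdot_fold; field.
have F3 : tdot X V = tdot Zs V by rewrite /X /Xx tdotDl -/Zs -/Ss compl addr0.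
have F4 : tdot Zs V = tdot Zs Y - 2 * (1 / (4 * C) * tnorm2 Zs).
  rewrite /tnorm2 /tdot !mulr_sumr -sumrB; apply: eq_bigr => l _.
  case: (boolP (l \in Om)) => lO; first by rewrite stat //; field; rewrite gt_eqF.
  by rewrite Zs0 //; ring.
have -> : (fun l => Zs l + Ss l) = X by [].
by rewrite F1 F2 F3 F4; field; rewrite gt_eqF.
Qed.
End Main.

Local Open Scope classical_set_scope.

Theorem theorem2 (R : realType) (K : nat) (n : 'I_K -> nat)
  (Om : {set idx n}) (Y : tensor R n) (C : R) (lam : 'I_K -> R) :
  (0 < K)%N ->
  (forall k, 0 < n k)%N ->
  Y = restr Om Y ->
  0 < C ->
  (forall k, 0 < lam k) ->
  (* for each fixed (Theta_k) in P^{n_1} x ... x P^{n_K}, the inner primal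
     problem (min over W^(k)) and the inner partial dual (max over Z, S) agree *)
  (forall Th : forall k, 'M[R]_(n k), (forall k, Pset (Th k)) ->
     primal_inner Om Y C lam Th = dual_inner Om Y C lam Th) /\
  (* hence the primal problem and the min-max problem have the same optimal value *)
  ereal_inf [set x | exists (Th : forall k, 'M[R]_(n k)) (Wk : 'I_K -> tensor R n),
                (forall k, Pset (Th k)) /\ x = primal_obj Om Y C lam Th Wk]
  = ereal_inf [set x | exists Th : forall k, 'M[R]_(n k),
                (forall k, Pset (Th k)) /\ x = dual_inner Om Y C lam Th].
Proof.
move=> _ _ HY C0 lam0.
have inner : forall Th : forall k, 'M[R]_(n k), (forall k, Pset (Th k)) ->
    primal_inner Om Y C lam Th = dual_inner Om Y C lam Th.
  move=> Th HTh; apply/le_anti/andP; split.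
    have [Wk [Zs [Ss [HZ HS E]]]] := @strong _ _ _ _ _ _ _ _ HY C0 lam0 HTh.
    apply: (@le_trans _ _ (primal_obj Om Y C lam Th Wk)).
      by apply: ereal_inf_lbound; exists Wk.
    by rewrite E; apply: ereal_sup_ubound; exists Zs, Ss; split.
  apply: ge_ereal_sup => _ [Z [S [HZ HS ->]]].
  apply: le_ereal_inf_tmp => _ [Wk ->].
  exact: (@weak _ _ _ _ _ _ _ _ HY C0 lam0 HTh).
split => //.
apply/le_anti/andP; split.
  apply: le_ereal_inf_tmp => _ [Th [HTh ->]]; rewrite -inner //.
  apply: le_ereal_inf_tmp => _ [Wk ->]; apply: ereal_inf_lbound; by exists Th, Wk.
apply: le_ereal_inf_tmp => _ [Th [Wk [HTh ->]]].
apply: (@le_trans _ _ (dual_inner Om Y C lam Th)).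
  by apply: ereal_inf_lbound; exists Th.
rewrite -inner //; apply: ereal_inf_lbound; by exists Wk.
Qed.
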